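(* Every polymatroid game possesses a pure Nash equilibrium. That is: let $N=\{1,\dots,n\}$ be a finite set of players and $E=\{1,\dots,m\}$ a finite set of resources; for each player $i$ let $f_i:2^E\to\mathbb{N}$ be an integral polymatroid rank function and $d_i\in\mathbb{N}$ with $d_i\le f_i(E)$, and let the strategy set of player $i$ be $X_i=\mathbb{B}_{f_i}(d_i)$; for each $i\in N,e\in E$ let $C_{i,e}:\mathbb{N}\times\mathbb{N}\to\mathbb{R}_+$ be regular, and let the private cost of player $i$ in profile $\vec x=(\vec x_j)_{j\in N}\in X_1\times\dots\times X_n$ be $\pi_i(\vec x)=\sum_{e\in E}C_{i,e}(x_{i,e};x_{-i,e})$ with $x_{-i,e}=\sum_{j\neq i}x_{j,e}$. Then there exists a profile $\vec x$ such that for every $i\in N$ and every $\vec y_i\in X_i$, $\pi_i(\vec x)\le\pi_i(\vec y_i,\vec x_{-i})$.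
   Context: $\mathbb{N}=\{0,1,2,\dots\}$. An integral polymatroid rank function is $f:2^E\to\mathbb{N}$ with $f(\emptyset)=0$, monotone ($f(U)\le f(V)$ for $U\subseteq V$) and submodular. $x_i(U)=\sum_{e\in U}x_{i,e}$; $\mathbb{B}_f(d)=\{\vec x\in\mathbb{N}^E: x(U)\le f(U)\ \forall U\subseteq E,\ x(E)=d\}$. For $C:\mathbb{N}\times\mathbb{N}\to\mathbb{R}$, $C^-(x;t)=C(x;t)-C(x-1;t)$ for $x\ge1$; $C$ is regular if $C^-(x;t)\le C^-(x;t+1)$ and $C^-(x;t+1)\le C^-(x+1;t)$ for all $x\ge1$, $t\in\mathbb{N}$. *)

(* Defs.v *)
From mathcomp Require Import all_boot all_order all_algebra.
From mathcomp Require Import reals.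
Set Implicit Arguments. Unset Strict Implicit. Unset Printing Implicit Defensive.
Import Order.TTheory GRing.Theory Num.Theory.

Definition polymatroid_rank (E : finType) (f : {set E} -> nat) : Prop :=
  [/\ f set0 = 0%N,
      (forall U V : {set E}, U \subset V -> (f U <= f V)%N) &
      (forall U V : {set E}, (f (U :|: V) + f (U :&: V) <= f U + f V)%N)].

Definition xsum (E : finType) (x : E -> nat) (U : {set E}) : nat :=
  (\sum_(e in U) x e)%N.

Definition in_polytope (E : finType) (f : {set E} -> nat) (d : nat)
  (x : E -> nat) : Prop :=
  (forall U : {set E}, (xsum x U <= f U)%N) /\ xsum x [set: E] = d.

Local Open Scope ring_scope.

Definition Cminus (R : ringType) (C : nat -> nat -> R) (x t : nat) : R :=
  C x t - C x.-1 t.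

Definition regular (R : numDomainType) (C : nat -> nat -> R) : Prop :=
  forall x t : nat, (1 <= x)%N ->
    Cminus C x t <= Cminus C x t.+1 /\ Cminus C x t.+1 <= Cminus C x.+1 t.

Definition others_load (n m : nat) (x : 'I_n -> 'I_m -> nat) (i : 'I_n)
  (e : 'I_m) : nat := (\sum_(j < n | j != i) x j e)%N.

Definition private_cost (R : ringType) (n m : nat)
  (C : 'I_n -> 'I_m -> nat -> nat -> R) (x : 'I_n -> 'I_m -> nat) (i : 'I_n) : R :=
  \sum_(e < m) C i e (x i e) (others_load x i e).

Definition deviate (n m : nat) (x : 'I_n -> 'I_m -> nat) (i : 'I_n)
  (y : 'I_m -> nat) : 'I_n -> 'I_m -> nat :=
  fun j => if j == i then y else x j.

(* Main.v *)
Require Import Defs.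
From mathcomp Require Import all_boot all_order all_algebra.
From mathcomp Require Import reals.
From mathcomp Require Import zify ring lra.
From Stdlib Require Import Classical.
Import Order.TTheory GRing.Theory Num.Theory.
Local Open Scope ring_scope.

(* Proof: insertion of demand units one at a time, followed by
   a repair phase of single-exchange best responses (Harks-Klimm-Peis).  *)

Module Aux.
Set Implicit Arguments. Unset Strict Implicit. Unset Printing Implicit Defensive.

Ltac nlia := unfold reverse_coercion in *; lia.

Definition inc (m : nat) (y : 'I_m -> nat) b := fun e => (y e + (e == b))%N.
Definition mv (m : nat) (y : 'I_m -> nat) a b := fun e => (y e - (e == a) + (e == b))%N.
Definition addh (m : nat) (T : 'I_m -> nat) h := fun e => (T e + (e == h))%N.
Definition subh (m : nat) (T : 'I_m -> nat) h := fun e => (T e - (e == h))%N.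
Definition Phi (R : ringType) (m : nat) (C : 'I_m -> nat -> nat -> R) (T y : 'I_m -> nat) : R :=
  \sum_(e < m) C e (y e) (T e).
Definition mg (R : ringType) (m : nat) (C : 'I_m -> nat -> nat -> R) (T : 'I_m -> nat) e k :=
  Cminus (C e) k (T e).
Definition opt (R : numDomainType) (m : nat) (f : {set 'I_m} -> nat) d (C : 'I_m -> nat -> nat -> R) T y :=
  in_polytope f d y /\ forall z, in_polytope f d z -> Phi C T y <= Phi C T z.
Definition lopt (R : numDomainType) (m : nat) (f : {set 'I_m} -> nat) d (C : 'I_m -> nat -> nat -> R) T y :=
  in_polytope f d y /\ forall a b, a != b -> (0 < y a)%N -> in_polytope f d (mv y a b) ->
     mg C T a (y a) <= mg C T b (y b).+1.

Section Basic.
Variable m : nat.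
Implicit Types (y z : 'I_m -> nat) (U V : {set 'I_m}).

Lemma sum_ind U b : (\sum_(e in U) (e == b) = (b \in U))%N.
Proof.
case: (boolP (b \in U)) => Hb.
  rewrite (bigD1 b) //= eqxx big1 ?addn0 // => i /andP [_ /negbTE ->] //.
rewrite big1 // => i Hi; case: eqP => // Eib; move: Hi; rewrite Eib (negbTE Hb) //.
Qed.

Lemma xsum_inc y b U : xsum (inc y b) U = (xsum y U + (b \in U))%N.
Proof. by rewrite /xsum /inc big_split /= sum_ind. Qed.

Lemma xsum_mv y a b U : (0 < y a)%N -> (xsum (mv y a b) U + (a \in U) = xsum y U + (b \in U))%N.
Proof.
move=> ya; rewrite -!sum_ind /xsum -!big_split /=; apply: eq_bigr => e _.
have H : (e == a) -> (0 < y e)%N by move/eqP->.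
rewrite /mv; move: H; case: (e == a); case: (e == b) => /= H; try lia; have := H isT; lia.
Qed.

Lemma xsum_ext y z U : y =1 z -> xsum y U = xsum z U.
Proof. by move=> H; apply: eq_bigr => e _; rewrite H. Qed.

Lemma inpoly_ext f d y z : y =1 z -> in_polytope f d y -> in_polytope f d z.
Proof. by move=> H [H1 H2]; split => [U|]; rewrite -(xsum_ext _ H). Qed.

Lemma xsum_setD y U V : (xsum y U = xsum y (U :&: V) + xsum y (U :\: V))%N.
Proof. by rewrite /xsum (@big_setID _ _ _ _ U V). Qed.

Lemma xsum_setU y U V : (xsum y (U :|: V) + xsum y (U :&: V) = xsum y U + xsum y V)%N.
Proof.
have H1 : xsum y (U :|: V) = (xsum y V + xsum y (U :\: V))%N.
  by rewrite /xsum (@big_setID _ _ _ _ (U :|: V) V) setIC setKU setDUl setDv setU0.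
have H2 := xsum_setD y U V; lia.
Qed.

Lemma xsum_le_total f d y e : in_polytope f d y -> (y e <= d)%N.
Proof.
move=> [_ <-]; rewrite /xsum (bigD1 e) ?inE //=; lia.
Qed.

Lemma mv_a y a b : a != b -> mv y a b a = (y a).-1.
Proof. by move=> ab; rewrite /mv eqxx (negbTE ab) addn0 subn1. Qed.
Lemma mv_b y a b : a != b -> mv y a b b = (y b).+1.
Proof. by move=> ab; rewrite /mv eqxx eq_sym (negbTE ab) subn0 addn1. Qed.
Lemma mv_o y a b e : e != a -> e != b -> mv y a b e = y e.
Proof. by move=> ea eb; rewrite /mv (negbTE ea) (negbTE eb) subn0 addn0. Qed.

End Basic.

Section PhiS.
Variables (R : ringType) (m : nat) (C : 'I_m -> nat -> nat -> R).
Implicit Types (y z T : 'I_m -> nat).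

Lemma sum_two (F : 'I_m -> R) a b : a != b -> (forall e, e != a -> e != b -> F e = 0) ->
  \sum_(e < m) F e = F a + F b.
Proof.
move=> ab H; rewrite (bigD1 a) //= (bigD1 b) 1?eq_sym //= big1 ?addr0 // => e /andP [ea eb].
exact: H.
Qed.

Lemma sum_one (F : 'I_m -> R) a : (forall e, e != a -> F e = 0) -> \sum_(e < m) F e = F a.
Proof. by move=> H; rewrite (bigD1 a) //= big1 ?addr0 // => e ea; apply: H. Qed.

Lemma Phi_inc T y b : Phi C T (inc y b) = Phi C T y + mg C T b (y b).+1.
Proof.
have -> : Phi C T (inc y b) = Phi C T y + (Phi C T (inc y b) - Phi C T y) by rewrite addrC subrK.
congr (_ + _); rewrite /Phi -sumrB (sum_one (a := b)) => [|e eb]; last by rewrite /inc (negbTE eb) addn0 subrr.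
by rewrite /inc eqxx addn1 /mg /Cminus.
Qed.

Lemma Phi_mv T y a b : a != b -> (0 < y a)%N ->
  Phi C T (mv y a b) = Phi C T y - mg C T a (y a) + mg C T b (y b).+1.
Proof.
move=> ab ya.
have -> : Phi C T (mv y a b) = Phi C T y + (Phi C T (mv y a b) - Phi C T y) by rewrite addrC subrK.
rewrite -addrA; congr (_ + _).
rewrite /Phi -sumrB (sum_two ab) => [|e ea eb]; last by rewrite mv_o // subrr.
rewrite mv_a // mv_b // /mg /Cminus /=.
case: (y a) ya => // k _ /=; by rewrite opprB.
Qed.
End PhiS.

Local Close Scope ring_scope.

Section Poly.
Variables (m : nat) (f : {set 'I_m} -> nat).
Hypothesis fP : polymatroid_rank f.
Implicit Types (y z : 'I_m -> nat) (U V : {set 'I_m}).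


Definition tight y U := (f U <= xsum y U)%N.

Lemma tight_UI d y U V : in_polytope f d y -> tight y U -> tight y V ->
  tight y (U :|: V) /\ tight y (U :&: V).
Proof.
case: fP => _ _ sub [By _] tU tV; rewrite /tight.
have := sub U V; have := xsum_setU y U V; have := By (U :|: V); have := By (U :&: V).
move: tU tV; rewrite /tight; intros; split; nlia.
Qed.

Lemma Bmv_char d y a b : in_polytope f d y -> a != b -> (0 < y a)%N ->
  (in_polytope f d (mv y a b) <-> forall U, b \in U -> a \notin U -> (xsum y U < f U)%N).
Proof.
move=> [By Ey] ab ya; split.
  move=> [Bz _] U bU aU; have := xsum_mv b U ya; have := Bz U.
  rewrite bU (negbTE aU); nlia.
move=> H; split; last first.
  have := xsum_mv b setT ya; rewrite !inE Ey; nlia.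
move=> U; have := xsum_mv b U ya; have := By U.
case: (boolP (b \in U)) => bU; case: (boolP (a \in U)) => aU /=; try nlia.
have := H U bU aU; nlia.
Qed.

Lemma Binc_char d y b : in_polytope f d y ->
  (in_polytope f d.+1 (inc y b) <-> forall U, b \in U -> (xsum y U < f U)%N).
Proof.
move=> [By Ey]; split.
  move=> [Bz _] U bU; have := xsum_inc y b U; have := Bz U; rewrite bU; nlia.
move=> H; split; last by rewrite xsum_inc Ey inE addn1.
move=> U; rewrite xsum_inc; have := By U.
case: (boolP (b \in U)) => bU /=; try nlia.
have := H U bU; nlia.
Qed.

Lemma exists_max (P : pred {set 'I_m}) : P set0 ->
  (forall U V, P U -> P V -> P (U :|: V)) ->
  exists D, P D /\ forall U, P U -> U \subset D.
Proof.
move=> P0 PU; exists (\bigcup_(U | P U) U); split.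
  by apply: (big_ind P) => // U HU.
by move=> U HU; apply: bigcup_sup.
Qed.

Lemma exists_min (P : pred {set 'I_m}) U0 : P U0 ->
  (forall U V, P U -> P V -> P (U :&: V)) ->
  exists M, P M /\ forall U, P U -> M \subset U.
Proof.
move=> P0 PI; exists (U0 :&: \bigcap_(U | P U) U); split.
  apply: (big_ind (fun X => P (U0 :&: X))).
  - by rewrite setIT.
  - by move=> X Y HX HY; rewrite setIIr; apply: PI.
  - by move=> i Hi; apply: PI.
move=> U HU; apply: subset_trans (subsetIr _ _) _.
exact: bigcap_inf.
Qed.

Lemma Aug d y : in_polytope f d y -> (d < f setT)%N -> exists e, in_polytope f d.+1 (inc y e).
Proof.
move=> By dlt.
have [D [TD maxD]] : exists D, tight y D /\ forall U, tight y U -> U \subset D.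
  apply: exists_max => [|U V tU tV].
    by rewrite /tight; case: fP => -> _ _.
  by case: (tight_UI By tU tV).
case: (boolP (D == setT)) => [/eqP DT|DnT].
  by move: TD; rewrite DT /tight; case: By => _ ->; nlia.
have : ~~ (setT \subset D) by rewrite subTset.
case/subsetPn => e _ eD.
exists e; apply/(Binc_char _ By) => U eU; rewrite ltnNge; apply/negP => tU.
by move: (subsetP (maxD U tU) e eU); rewrite (negbTE eD).
Qed.

Lemma sum_strict y z (S : {set 'I_m}) e : e \in S -> (z e < y e)%N -> (forall g, g \in S -> (z g <= y g)%N) ->
  (xsum z S < xsum y S)%N.
Proof.
move=> eS lt le; rewrite /xsum (bigD1 e) //= [X in (_ < X)%N](bigD1 e) //=.
rewrite -addSn; apply: leq_add => //.
by apply: leq_sum => i /andP [iS _]; apply: le.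
Qed.

Lemma Exch d y z e : in_polytope f d y -> in_polytope f d z -> (z e < y e)%N ->
  exists g, [/\ (y g < z g)%N, in_polytope f d (mv y e g) & in_polytope f d (mv z g e)].
Proof.
move=> By Bz lt.
have [D [[TD eD] maxD]] : exists D, (tight y D /\ e \notin D) /\
    forall U, tight y U /\ e \notin U -> U \subset D.
  have := @exists_max (fun U => tight y U && (e \notin U)).
  move=> /(_ _ _) [| U V /andP [tU eU] /andP [tV eV] | ].
  - by rewrite /tight; case: fP => -> _ _; rewrite in_set0.
  - by case: (tight_UI By tU tV) => -> _; rewrite in_setU negb_or eU eV.
  move=> D [/andP [TD eD] H]; exists D; split => // U [tU eU]; apply: H; rewrite tU.
  by [].
have ye : (0 < y e)%N by nlia.
case: (boolP [exists U, tight z U && (e \in U)]) => [/existsP [U0 /andP [tU0 eU0]]|noT].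
  have [M [[TM eM] minM]] : exists M, (tight z M /\ e \in M) /\
      forall U, tight z U /\ e \in U -> M \subset U.
    have := @exists_min (fun U => tight z U && (e \in U)) U0.
    move=> /(_ _ _) [| U V /andP [tU eU] /andP [tV eV] | ].
    - by rewrite tU0.
    - by case: (tight_UI Bz tU tV) => _ ->; rewrite in_setI eU eV.
    move=> M [/andP [TM eM] H]; exists M; split => // U [tU eU]; apply: H; rewrite tU.
    by [].
  case: (pickP (fun g => [&& g \in M, g \notin D & (y g < z g)%N])) => [g /and3P [gM gD lg]|H].
    exists g; split => //.
    - apply/(Bmv_char By _ ye) => [|U gU eU].
        by apply/eqP => Eg; move: lg; rewrite -Eg; nlia.
      rewrite ltnNge; apply/negP => tU.
      by move: (subsetP (maxD U (conj tU eU)) g gU); rewrite (negbTE gD).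
    - apply/(Bmv_char Bz _ _) => [|| U eU gU]; first (by apply/eqP => Eg; move: lg; rewrite Eg; nlia).
        by nlia.
      rewrite ltnNge; apply/negP => tU.
      by move: (subsetP (minM U (conj tU eU)) g gM); rewrite (negbTE gU).
  exfalso.
  have le : forall g, g \in M :\: D -> (z g <= y g)%N.
    move=> g; rewrite in_setD => /andP [gD gM]; move: (H g); rewrite gM gD /=.
    by move=> /negbT; rewrite -leqNgt.
  have eMD : e \in M :\: D by rewrite in_setD eD eM.
  have := sum_strict eMD lt le.
  case: fP => _ _ sub; have := sub M D.
  have := xsum_setU y M D; have := xsum_setD y M D; have := xsum_setD z M D.
  case: By => By _; case: Bz => Bz _.
  have := Bz (M :&: D); have := By (M :|: D).
  move: TM TD; rewrite /tight; intros; nlia.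
case: (pickP (fun g => (g \notin D) && (y g < z g)%N)) => [g /andP [gD lg]|H].
  exists g; split => //.
  - apply/(Bmv_char By _ ye) => [|U gU eU].
      by apply/eqP => Eg; move: lg; rewrite -Eg; nlia.
    rewrite ltnNge; apply/negP => tU.
    by move: (subsetP (maxD U (conj tU eU)) g gU); rewrite (negbTE gD).
  - apply/(Bmv_char Bz _ _) => [|| U eU gU]; first (by apply/eqP => Eg; move: lg; rewrite Eg; nlia).
      by nlia.
    rewrite ltnNge; apply/negP => tU.
    by move/negP: noT; apply; apply/existsP; exists U; rewrite eU andbT.
exfalso.
have le : forall g, g \in ~: D -> (z g <= y g)%N.
  move=> g; rewrite in_setC => gD; move: (H g); rewrite gD /=.
  by move=> /negbT; rewrite -leqNgt.
have eD' : e \in ~: D by rewrite in_setC.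
have := sum_strict eD' lt le.
have := xsum_setD y setT D; have := xsum_setD z setT D.
rewrite setTI setTD.
case: By => By Ey; case: Bz => Bz Ez.
have := Bz D.
move: TD; rewrite /tight; intros; nlia.
Qed.

End Poly.

Local Open Scope ring_scope.


Lemma ex_argmin (R : realDomainType) (I : finType) (P : pred I) (F : I -> R) i0 :
  P i0 -> exists i, P i /\ forall j, P j -> F i <= F j.
Proof. by move=> Pi0; case: (arg_minP F Pi0) => i Pi H; exists i; split => // j Pj; apply: H. Qed.

Section Reg.
Variables (R : realType) (C : nat -> nat -> R).
Hypothesis CR : regular C.

Lemma reg_t k t t' : (1 <= k)%N -> (t <= t')%N -> Cminus C k t <= Cminus C k t'.
Proof.
move=> k1; elim: t' => [|t' IH]; first by rewrite leqn0 => /eqP ->.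
rewrite leq_eqVlt => /orP [/eqP -> //|]; rewrite ltnS => /IH H.
by apply: le_trans H _; case: (CR t' k1).
Qed.

Lemma reg_s k t : (1 <= k)%N -> Cminus C k t.+1 <= Cminus C k.+1 t.
Proof. by move=> k1; case: (CR t k1). Qed.

Lemma reg_k k k' t : (1 <= k)%N -> (k <= k')%N -> Cminus C k t <= Cminus C k' t.
Proof.
move=> k1; elim: k' => [|k' IH]; first by move: k1; case: k.
rewrite leq_eqVlt => /orP [/eqP -> //|]; rewrite ltnS => kk.
have H := IH kk; have k'1 := leq_trans k1 kk.
apply: le_trans H _; apply: le_trans (reg_s t k'1).
by case: (CR t k'1).
Qed.
End Reg.

Lemma sumn_split2 m (F : 'I_m -> nat) a b : a != b ->
  (\sum_i F i = F a + F b + \sum_(i | (i != a) && (i != b)) F i)%N.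
Proof. by move=> ab; rewrite (bigD1 a) //= (bigD1 b) 1?eq_sym //= addnA. Qed.

Lemma sumn_two m (F G : 'I_m -> nat) a b : a != b ->
  (forall i, i != a -> i != b -> F i = G i) ->
  (\sum_i F i + G a + G b = \sum_i G i + F a + F b)%N.
Proof.
move=> ab H; rewrite (sumn_split2 F ab) (sumn_split2 G ab).
have -> : (\sum_(i | (i != a) && (i != b)) F i = \sum_(i | (i != a) && (i != b)) G i)%N.
  by apply: eq_bigr => i /andP [ia ib]; apply: H.
lia.
Qed.

Section Opt.
Variables (R : realType) (m : nat) (f : {set 'I_m} -> nat) (C : 'I_m -> nat -> nat -> R).
Hypothesis fP : polymatroid_rank f.
Hypothesis CR : forall e, regular (C e).
Implicit Types (y z T : 'I_m -> nat).

Lemma mg_t T T' e k : (1 <= k)%N -> (T e <= T' e)%N -> mg C T e k <= mg C T' e k.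
Proof. by move=> k1 le; apply: reg_t. Qed.

Lemma mg_k T e k k' : (1 <= k)%N -> (k <= k')%N -> mg C T e k <= mg C T e k'.
Proof. by move=> k1 le; apply: reg_k. Qed.

Lemma mg_s T T' e k : (1 <= k)%N -> T e = (T' e).+1 -> mg C T e k <= mg C T' e k.+1.
Proof. by move=> k1 E; rewrite /mg E; apply: reg_s. Qed.

Lemma G2L d T y : opt f d C T y -> lopt f d C T y.
Proof.
move=> [By H]; split => // a b ab ya Bm.
have := H _ Bm; rewrite Phi_mv //; lra.
Qed.

Lemma Phi_ext T T' y : T =1 T' -> Phi C T y = Phi C T' y.
Proof. by move=> E; apply: eq_bigr => e _; rewrite E. Qed.

Lemma opt_ext d T T' y : T =1 T' -> opt f d C T y -> opt f d C T' y.
Proof.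
move=> E [By H]; split => // z Bz; rewrite -!(Phi_ext _ E); exact: H.
Qed.

Lemma L2G d T y : lopt f d C T y -> opt f d C T y.
Proof.
move=> [By Hy]; split => // z Bz.
move Hk: (\sum_(e < m) (y e - z e))%N => k.
elim: k z Bz Hk => [|k IH] z Bz Hk.
  have le : forall e, (y e <= z e)%N.
    move=> e; move/eqP: Hk; rewrite sum_nat_eq0 => /forallP /(_ e) /=.
    by rewrite subn_eq0.
  have ge : forall e, (z e <= y e)%N.
    move=> e; rewrite leqNgt; apply/negP => lt.
    have := sum_strict (S := setT) (in_setT e) lt (fun g _ => le g).
    by case: By => _ ->; case: Bz => _ ->; rewrite ltnn.
  rewrite le_eqVlt; apply/orP; left; apply/eqP; apply: eq_bigr => e _.
  by congr C; apply/eqP; rewrite eqn_leq le ge.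
case: (pickP (fun e => (z e < y e)%N)) => [e lt|H]; last first.
  move: Hk; rewrite big1 // => e _; apply/eqP; rewrite subn_eq0 leqNgt.
  by rewrite H.
have [g [lg Bye Bzg]] := Exch fP By Bz lt.
have ge : g != e by apply/eqP => Eg; move: lg; rewrite Eg; nlia.
have z'k : (\sum_(i < m) (y i - mv z g e i))%N = k.
  have H2 : forall i, i != g -> i != e -> (y i - mv z g e i = y i - z i)%N.
    by move=> i ig ie; rewrite mv_o.
  have := @sumn_two _ (fun i => y i - mv z g e i)%N (fun i => y i - z i)%N _ _ ge H2.
  rewrite /= mv_a // mv_b // Hk; nlia.
have := IH _ Bzg z'k.
rewrite Phi_mv //; last by nlia.
have eg : e != g by rewrite eq_sym.
have := Hy e g eg (leq_ltn_trans (leq0n _) lt) Bye.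
have := mg_k T e (ltn0Sn (z e)) lt.
have := mg_k T g (ltn0Sn (y g)) lg.
lra.
Qed.

End Opt.



Definition Bb (m : nat) (f : {set 'I_m} -> nat) d (y : 'I_m -> nat) :=
  [forall U, (xsum y U <= f U)%N] && (xsum y setT == d).

Lemma inpolyP m (f : {set 'I_m} -> nat) d y : reflect (in_polytope f d y) (Bb f d y).
Proof.
apply: (iffP andP) => [[/forallP H /eqP E]|[H E]]; first by split.
by split; [apply/forallP|apply/eqP].
Qed.

Lemma mv_mv_g m (y : 'I_m -> nat) h g b : h != g -> b != h -> b != g -> (0 < y h)%N ->
  mv (mv y h g) g b =1 mv y h b.
Proof.
move=> hg bh bg yh i; rewrite /mv.
have gh : g != h by rewrite eq_sym.
have hb : h != b by rewrite eq_sym.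
have gb : g != b by rewrite eq_sym.
case: (eqVneq i h) => [->|ih]; first by rewrite ?(negbTE hg) ?(negbTE hb) /=; lia.
case: (eqVneq i g) => [->|ig]; first by rewrite ?(negbTE gh) ?(negbTE gb) /=; lia.
by rewrite /=; lia.
Qed.

Lemma mv_mv_h m (y : 'I_m -> nat) h g a : h != g -> a != h -> a != g -> (0 < y h)%N ->
  mv (mv y h g) a h =1 mv y a g.
Proof.
move=> hg ah ag yh i; rewrite /mv.
have gh : g != h by rewrite eq_sym.
have ha : h != a by rewrite eq_sym.
have ga : g != a by rewrite eq_sym.
case: (eqVneq i h) => [->|ih]; first by rewrite ?(negbTE hg) ?(negbTE ha) /=; lia.
case: (eqVneq i g) => [->|ig]; first by rewrite ?(negbTE gh) ?(negbTE ga) /=; lia.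
by rewrite /=; lia.
Qed.

Section S.
Variables (R : realType) (m : nat) (f : {set 'I_m} -> nat) (C : 'I_m -> nat -> nat -> R).
Hypothesis fP : polymatroid_rank f.
Hypothesis CR : forall e, regular (C e).
Implicit Types (y z T : 'I_m -> nat).

Lemma mg_addh_o T h i k : i != h -> mg C (addh T h) i k = mg C T i k.
Proof. by move=> ih; rewrite /mg /addh (negbTE ih) addn0. Qed.

Lemma Unused d T y h : opt f d C T y -> y h = 0%N -> opt f d C (addh T h) y.
Proof.
move/(G2L (f := f)) => [By Hy] yh; apply: (L2G fP CR); split => // a b ab ya Bm.
have ah : a != h by apply/eqP => E; move: ya; rewrite E yh.
have := Hy a b ab ya Bm.
have := @mg_t _ _ C CR T (addh T h) b _ (ltn0Sn (y b)) (leq_addr _ _).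
rewrite (mg_addh_o _ _ ah); lra.
Qed.

Lemma S1 d T y : opt f d C T y -> (d < f setT)%N -> exists e, opt f d.+1 C T (inc y e).
Proof.
move=> Oy dlt; have [By Hy] := G2L Oy.
have [e0 Be0] := Aug fP By dlt.
have [e [/inpolyP Be Hmin]] := @ex_argmin _ _ (fun e => Bb f d.+1 (inc y e))
   (fun e => mg C T e (y e).+1) e0 (introT (inpolyP _ _ _) Be0).
exists e; apply: (L2G fP CR); split => // a b ab ya Bm.
have ie : inc y e e = (y e).+1 by rewrite /inc eqxx addn1.
have io : forall i, i != e -> inc y e i = y i by move=> i ie'; rewrite /inc (negbTE ie') addn0.
case: (eqVneq a e) => [Eae|ae].
  subst a; rewrite ie io 1?eq_sym //.
  apply: Hmin; apply/inpolyP; apply: inpoly_ext Bm => i.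
  rewrite /mv /inc; case: (i == e) => /=; lia.
have ya' : (0 < y a)%N by rewrite -io.
rewrite io //.
have Hc := proj1 (Bmv_char Be ab ya) Bm.
case: (eqVneq b e) => [Ebe|be].
  subst b; rewrite ie.
  have Bm2 : in_polytope f d (mv y a e).
    apply/(Bmv_char By ab ya') => U eU aU; have := Hc U eU aU.
    rewrite xsum_inc eU; nlia.
  have H1 := Hy _ _ ab ya' Bm2; have H2 := mg_k CR T e (ltn0Sn (y e)) (leqnSn _); lra.
rewrite io //.
have Bm2 : in_polytope f d (mv y a b).
  apply/(Bmv_char By ab ya') => U bU aU; have := Hc U bU aU.
  rewrite xsum_inc; nlia.
exact: Hy.
Qed.


Lemma S2 d T y h : opt f d C T y -> (0 < y h)%N -> ~ opt f d C (addh T h) y ->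
   exists g, g != h /\ opt f d C (addh T h) (mv y h g).
Proof.
move=> Oy yh NO; have [By Hy] := G2L Oy.
set T' := addh T h.
have T'h : T' h = (T h).+1 by rewrite /T' /addh eqxx addn1.
case: (boolP [exists a, exists b, [&& a != b, (0 < y a)%N, Bb f d (mv y a b) &
           mg C T' b (y b).+1 < mg C T' a (y a)]]) => [H|H]; last first.
  exfalso; apply: NO; apply: (L2G fP CR); split => // a b ab ya Bm.
  rewrite leNgt; apply/negP => lt; move/negP: H; apply; apply/existsP; exists a.
  by apply/existsP; exists b; rewrite ab ya lt (introT (inpolyP _ _ _) Bm).
case/existsP: H => a /existsP [b /and4P [ab ya /inpolyP Bm lt]].
have Eah : a = h.
  apply/eqP; apply/negPn/negP => ah.
  have := Hy a b ab ya Bm.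
  have := @mg_t _ _ C CR T T' b _ (ltn0Sn (y b)) (leq_addr _ _).
  move: lt; rewrite (mg_addh_o _ _ ah); lra.
subst a.
have bh : b != h by rewrite eq_sym.
have Pb : [&& b != h, Bb f d (mv y h b) & mg C T b (y b).+1 < mg C T' h (y h)].
  by rewrite bh (introT (inpolyP _ _ _) Bm) -(mg_addh_o _ _ bh) lt.
have [g [/and3P [gh /inpolyP Bg ltg] Hmin]] := @ex_argmin _ _
   (fun g => [&& g != h, Bb f d (mv y h g) & mg C T g (y g).+1 < mg C T' h (y h)])
   (fun g => mg C T g (y g).+1) b Pb.
have gmin : forall b', b' != h -> in_polytope f d (mv y h b') ->
    mg C T g (y g).+1 <= mg C T b' (y b').+1.
  move=> b' b'h Bb'; case: (ltP (mg C T b' (y b').+1) (mg C T' h (y h))) => L.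
    by apply: Hmin; rewrite b'h L (introT (inpolyP _ _ _) Bb').
  by apply: le_trans L; apply: ltW.
have hg : h != g by rewrite eq_sym.
exists g; split => //; apply: (L2G fP CR); split => // a' b' a'b' ya' Bm'.
have y'h : mv y h g h = (y h).-1 by rewrite mv_a.
have y'g : mv y h g g = (y g).+1 by rewrite mv_b.
have y'o : forall i, i != h -> i != g -> mv y h g i = y i by move=> i ih ig; rewrite mv_o.
have Hc := proj1 (Bmv_char Bg a'b' ya') Bm'.
have xs : forall U, (xsum (mv y h g) U + (h \in U) = xsum y U + (g \in U))%N.
  by move=> U; apply: xsum_mv.
case: (eqVneq a' g) => [Ea'|a'g].
  subst a'; rewrite y'g (mg_addh_o _ _ gh).
  case: (eqVneq b' h) => [Eb'|b'h].
    subst b'; rewrite y'h prednK //; exact: ltW.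
  have b'g : b' != g by rewrite eq_sym.
  rewrite y'o // (mg_addh_o _ _ b'h); apply: gmin => //.
  by apply: inpoly_ext Bm'; apply: mv_mv_g.
case: (eqVneq a' h) => [Ea'|a'h].
  subst a'; rewrite y'h in ya' *.
  have H1 : mg C T' h (y h).-1 <= mg C T h (y h).
    by rewrite -{2}(prednK yh); apply: (mg_s CR) => //.
  apply: (le_trans H1).
  case: (eqVneq b' g) => [Eb'|b'g].
    subst b'; rewrite y'g (mg_addh_o _ _ gh).
    have := Hy h g hg yh Bg; have := mg_k CR T g (ltn0Sn (y g)) (leqnSn _); lra.
  have b'h : b' != h by rewrite eq_sym.
  rewrite y'o // (mg_addh_o _ _ b'h); apply: Hy => //.
  apply/(Bmv_char By _ yh) => [|U b'U hU]; first by rewrite eq_sym.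
  have K1 := Hc U b'U hU; have K2 := xs U; rewrite (negbTE hU) in K2.
  clear -K1 K2; nlia.
have ya2 : (0 < y a')%N by rewrite -y'o.
rewrite y'o // (mg_addh_o _ _ a'h).
case: (eqVneq b' h) => [Eb'|b'h].
  subst b'; rewrite y'h prednK //.
  have Bag : in_polytope f d (mv y a' g).
    by apply: inpoly_ext Bm'; apply: mv_mv_h.
  have := Hy a' g a'g ya2 Bag; move: ltg; lra.
case: (eqVneq b' g) => [Eb'|b'g].
  subst b'; rewrite y'g (mg_addh_o _ _ gh).
  have Bag : in_polytope f d (mv y a' g).
    apply/(Bmv_char By a'g ya2) => U gU aU.
    have K1 := Hc U gU aU; have K2 := xs U; rewrite gU in K2.
    clear -K1 K2; nlia.
  have := Hy a' g a'g ya2 Bag; have := mg_k CR T g (ltn0Sn (y g)) (leqnSn _); lra.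
rewrite y'o // (mg_addh_o _ _ b'h).
case: (boolP (Bb f d (mv y a' b'))) => [/inpolyP Bab|NB]; first exact: Hy.
have [U [b'U a'U tU]] : exists U : {set 'I_m}, [/\ b' \in U, a' \notin U & (f U <= xsum y U)%N].
  case: (boolP [exists U : {set 'I_m}, [&& b' \in U, a' \notin U & (f U <= xsum y U)%N]]).
    by case/existsP => U /and3P [*]; exists U.
  move=> NE; exfalso; move/negP: NB; apply; apply/inpolyP.
  apply/(Bmv_char By a'b' ya2) => U bU aU; rewrite ltnNge; apply/negP => tU.
  by move/negP: NE; apply; apply/existsP; exists U; rewrite bU aU tU.
have HU := Hc U b'U a'U; have xU := xs U.
have hU : h \in U by move: HU xU tU; clear; case: (h \in U); case: (g \in U); nlia.
have gU : g \notin U by move: HU xU tU; rewrite hU; clear; case: (g \in U); nlia.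
have Bag : in_polytope f d (mv y a' g).
  apply/(Bmv_char By a'g ya2) => V gV aV; rewrite ltnNge; apply/negP => tV.
  have [tW _] := tight_UI fP By tU tV.
  have := Hc (U :|: V); rewrite !in_setU b'U negb_or (negbTE a'U) aV => /(_ isT isT).
  have := xs (U :|: V); rewrite !in_setU hU gV orbT /=.
  move: tW; rewrite /tight; clear; nlia.
have Bhb : in_polytope f d (mv y h b').
  have hb' : h != b' by rewrite eq_sym.
  apply/(Bmv_char By hb' yh) => V bV hV; rewrite ltnNge; apply/negP => tV.
  have [_ tW] := tight_UI fP By tU tV.
  have := Hc (U :&: V); rewrite !in_setI b'U bV (negbTE a'U) => /(_ isT isT).
  have := xs (U :&: V); rewrite !in_setI (negbTE gU) (negbTE hV) andbF /=.
  move: tW; rewrite /tight; clear; nlia.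
have := Hy a' g a'g ya2 Bag; have := gmin b' b'h Bhb; clear; lra.
Qed.


Lemma JP0 d T y h : opt f d C T y -> opt f d.+1 C T (inc y h) -> (0 < T h)%N ->
  opt f d.+1 C (subh T h) (inc y h).
Proof.
move=> Oy Oy' Th; have [By Hy] := G2L Oy; have [By' Hy'] := G2L Oy'.
apply: (L2G fP CR); split => // a b ab ya Bm.
have HT : forall k, (1 <= k)%N -> mg C (subh T h) a k <= mg C T a k.
  by move=> k k1; apply: (mg_t CR) => //; rewrite /subh leq_subr.
apply: (le_trans (HT _ ya)).
case: (eqVneq b h) => [Eb|bh]; last first.
  have -> : mg C (subh T h) b (inc y h b).+1 = mg C T b (inc y h b).+1.
    by rewrite /mg /subh (negbTE bh) subn0.
  exact: Hy'.
subst b.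
have ah : a != h by [].
have ya2 : (0 < y a)%N by move: ya; rewrite /inc (negbTE ah) addn0.
have -> : inc y h a = y a by rewrite /inc (negbTE ah) addn0.
have -> : inc y h h = (y h).+1 by rewrite /inc eqxx addn1.
have H2 : mg C T h (y h).+1 <= mg C (subh T h) h (y h).+2.
  apply: (mg_s CR) => //; rewrite /subh eqxx subn1 prednK //.
apply: (le_trans _ H2); apply: Hy => //.
have Hc := proj1 (Bmv_char By' ab ya) Bm.
apply/(Bmv_char By ah ya2) => U hU aU.
have K1 := Hc U hU aU; have K2 := xsum_inc y h U.
clear -K1 K2; nlia.
Qed.

Lemma JP1 d T y h0 h : opt f d C T y -> h0 != h -> (0 < y h0)%N -> (0 < T h)%N ->
  opt f d C (addh T h0) (mv y h0 h) -> opt f d C (subh (addh T h0) h) (mv y h0 h).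
Proof.
move=> Oy h0h yh0 Th Oy'; have [By Hy] := G2L Oy; have [By' Hy'] := G2L Oy'.
set T1 := addh T h0; set T2 := subh T1 h.
apply: (L2G fP CR); split => // a b ab ya Bm.
have HT : forall k, (1 <= k)%N -> mg C T2 a k <= mg C T1 a k.
  by move=> k k1; apply: (mg_t CR) => //; rewrite /T2 /subh leq_subr.
case: (eqVneq b h) => [Eb|bh]; last first.
  apply: (le_trans (HT _ ya)).
  have -> : mg C T2 b (mv y h0 h b).+1 = mg C T1 b (mv y h0 h b).+1.
    by rewrite /mg /T2 /subh (negbTE bh) subn0.
  exact: Hy'.
subst b.
have hh0 : h != h0 by rewrite eq_sym.
have -> : mv y h0 h h = (y h).+1 by rewrite mv_b.
have H2 : mg C T h (y h).+1 <= mg C T2 h (y h).+2.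
  apply: (mg_s CR) => //; rewrite /T2 /T1 /subh /addh eqxx (negbTE hh0) addn0 subn1 prednK //.
apply: (le_trans _ H2).
case: (eqVneq a h0) => [Ea|ah0].
  subst a; rewrite mv_a // in ya *.
  have H3 : mg C T2 h0 (y h0).-1 <= mg C T h0 (y h0).
    rewrite -{2}(prednK yh0); apply: (mg_s CR) => //.
    by rewrite /T2 /T1 /subh /addh eqxx (negbTE h0h) subn0 addn1.
  apply: (le_trans H3); exact: Hy.
have ah : a != h by [].
rewrite mv_o // in ya *.
have -> : mg C T2 a (y a) = mg C T a (y a).
  by rewrite /mg /T2 /T1 /subh /addh (negbTE ah) (negbTE ah0) subn0 addn0.
apply: Hy => //.
have ya' : (0 < mv y h0 h a)%N by rewrite mv_o.
have Hc := proj1 (Bmv_char By' ab ya') Bm.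
apply/(Bmv_char By ah ya) => U hU aU.
have K1 := Hc U hU aU; have K2 := xsum_mv h U yh0; rewrite hU in K2.
clear -K1 K2; nlia.
Qed.

End S.


Definition load (n m : nat) (x : 'I_n -> 'I_m -> nat) e := (\sum_(j < n) x j e)%N.

Section GameBasic.
Variables (n m : nat).
Implicit Types (x : 'I_n -> 'I_m -> nat) (y : 'I_m -> nat).

Lemma others_plus x i e : (others_load x i e + x i e = load x e)%N.
Proof. by rewrite /others_load /load [in RHS](bigD1 i) //= addnC. Qed.

Lemma others_dev x i y : others_load (deviate x i y) i =1 others_load x i.
Proof.
move=> e; apply: eq_bigr => j ji; by rewrite /deviate (negbTE ji).
Qed.

Lemma others_dev_q x k y q e : q != k ->
  (others_load (deviate x k y) q e + x k e = others_load x q e + y e)%N.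
Proof.
move=> qk; have kq : k != q by rewrite eq_sym.
rewrite /others_load (bigD1 k) //= [X in (_ = X + _)%N](bigD1 k) //=.
rewrite /deviate eqxx.
have -> : (\sum_(i < n | (i != q) && (i != k)) (if i == k then y else x i) e =
           \sum_(i < n | (i != q) && (i != k)) x i e)%N.
  by apply: eq_bigr => i /andP [_ ik]; rewrite (negbTE ik).
set S := (\sum_(i < n | _) _)%N; lia.
Qed.

Lemma load_dev x k y e : (load (deviate x k y) e + x k e = load x e + y e)%N.
Proof.
rewrite /load (bigD1 k) //= [X in (_ = X + _)%N](bigD1 k) //= /deviate eqxx.
have -> : (\sum_(i < n | i != k) (if i == k then y else x i) e =
           \sum_(i < n | i != k) x i e)%N.
  by apply: eq_bigr => i ik; rewrite (negbTE ik).
set S := (\sum_(i < n | _) _)%N; lia.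
Qed.

Lemma others_ge x k p e : p != k -> (x p e <= others_load x k e)%N.
Proof. by move=> pk; rewrite /others_load (bigD1 p) //= leq_addr. Qed.

Lemma dev_k x k y : deviate x k y k = y.
Proof. by rewrite /deviate eqxx. Qed.
Lemma dev_q x k y q : q != k -> deviate x k y q = x q.
Proof. by move=> qk; rewrite /deviate (negbTE qk). Qed.

End GameBasic.

Lemma opt_exty (R : realType) m (f : {set 'I_m} -> nat) d (C : 'I_m -> nat -> nat -> R) T y y' :
  y =1 y' -> opt f d C T y -> opt f d C T y'.
Proof.
move=> E [By H]; split; first exact: inpoly_ext By.
move=> z Bz; have <- : Phi C T y = Phi C T y' by apply: eq_bigr => e _; rewrite E.
exact: H.
Qed.

Definition psum (F : nat -> nat) k := (\sum_(a < k) F a.+1)%N.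

Lemma psumS F k : (psum F k.+1 = psum F k + F k.+1)%N.
Proof. by rewrite /psum big_ord_recr. Qed.

Lemma G_mv m (F : 'I_m -> nat -> nat) y h g : h != g -> (0 < y h)%N ->
  (\sum_(e < m) psum (F e) (mv y h g e) + F h (y h) =
   \sum_(e < m) psum (F e) (y e) + F g (y g).+1)%N.
Proof.
move=> hg yh.
have H2 : forall i, i != h -> i != g -> psum (F i) (mv y h g i) = psum (F i) (y i).
  by move=> i ih ig; rewrite mv_o.
have := @sumn_two _ (fun e => psum (F e) (mv y h g e)) (fun e => psum (F e) (y e)) _ _ hg H2.
rewrite /= mv_a // mv_b // psumS.
have -> : psum (F h) (y h) = (psum (F h) (y h).-1 + F h (y h))%N.
  by case: (y h) yh => // k _; rewrite psumS.
set A := (\sum_(e < m) psum (F e) (mv y h g e))%N.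
set B := (\sum_(e < m) psum (F e) (y e))%N.
lia.
Qed.

Lemma rank_lt (R : realType) m D (w : 'I_m -> nat -> R) e1 a1 e2 a2 : (a1 <= D)%N ->
  w e1 a1 < w e2 a2 ->
  (#|[set pr : 'I_m * 'I_D.+1 | (w pr.1 pr.2 < w e1 a1)%R]| <
   #|[set pr : 'I_m * 'I_D.+1 | (w pr.1 pr.2 < w e2 a2)%R]|)%N.
Proof.
move=> aD lt; apply: proper_card; apply/properP; split.
  by apply/subsetP => pr; rewrite !inE => H; apply: lt_trans lt.
exists (e1, inord a1); rewrite !inE /= inordK ?ltnS //.
by rewrite lt_def eqxx /=.
Qed.

Section Game.
Variables (R : realType) (n m : nat) (f : 'I_n -> {set 'I_m} -> nat) (dd : 'I_n -> nat)
  (C : 'I_n -> 'I_m -> nat -> nat -> R).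
Hypothesis fP : forall i, polymatroid_rank (f i).
Hypothesis CR : forall i e, regular (C i e).
Implicit Types (x : 'I_n -> 'I_m -> nat) (y : 'I_m -> nat).

Definition NE x := forall q, opt (f q) (dd q) (C q) (others_load x q) (x q).

Definition status x h p :=
  (exists y d', [/\ dd p = d'.+1, x p =1 inc y h & opt (f p) d' (C p) (others_load x p) y]) \/
  (exists y h0, [/\ h0 != h, (0 < y h0)%N, x p =1 mv y h0 h, (0 < others_load x p h0)%N &
                   opt (f p) (dd p) (C p) (subh (others_load x p) h0) y]).

Definition Inv L0 x h p :=
  [/\ (forall e, load x e = L0 e + (e == h))%N, (0 < x p h)%N,
      (forall q, q != p -> opt (f q) (dd q) (C q) (subh (others_load x q) h) (x q)),
      opt (f p) (dd p) (C p) (others_load x p) (x p) & status x h p].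

Definition DD := (\sum_(q < n) dd q)%N.
Definition ww L0 q e a := Cminus (C q e) a (L0 e + 1 - a)%N.
Definition rk L0 q e a := #|[set pr : 'I_m * 'I_DD.+1 | ww L0 q pr.1 pr.2 < ww L0 q e a]|.
Definition GG L0 q y := (\sum_(e < m) psum (rk L0 q e) (y e))%N.
Definition mu L0 x := (\sum_(q < n) GG L0 q (x q))%N.

Lemma mu_dev L0 x k y : (mu L0 (deviate x k y) + GG L0 k (x k) = mu L0 x + GG L0 k y)%N.
Proof.
rewrite /mu (bigD1 k) //= [X in (_ = X + _)%N](bigD1 k) //= dev_k.
have -> : (\sum_(i < n | i != k) GG L0 i (deviate x k y i) = \sum_(i < n | i != k) GG L0 i (x i))%N.
  by apply: eq_bigr => i ik; rewrite dev_q.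
set S := (\sum_(i < n | _) _)%N; lia.
Qed.

Lemma dd_le k : (dd k <= DD)%N.
Proof. by rewrite /DD (bigD1 k) //= leq_addr. Qed.


Lemma subh_addh (T : 'I_m -> nat) h : (0 < T h)%N -> addh (subh T h) h =1 T.
Proof.
move=> Th e; rewrite /addh /subh; case: (eqVneq e h) => [->|eh] /=; last by lia.
by lia.
Qed.

Lemma step L0 x h p : Inv L0 x h p -> ~ NE x ->
  exists x' g k, Inv L0 x' g k /\ (mu L0 x' < mu L0 x)%N.
Proof.
move=> [Hload Hph Hvirt Hp Hst] nNE.
have [k nk] := not_all_ex_not _ _ nNE.
have kp : k != p by apply/eqP => E; apply: (nk); rewrite E.
have pk : p != k by rewrite eq_sym.
set O := others_load x k.
have Oh : (0 < O h)%N := leq_trans Hph (others_ge x h pk).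
have Vk := Hvirt k kp.
have EO := subh_addh Oh.
have xkh : (0 < x k h)%N.
  case: (posnP (x k h)) => // z; exfalso; apply: (nk); apply: opt_ext EO _.
  exact: (Unused (fP k) (CR k) Vk z).
have NO' : ~ opt (f k) (dd k) (C k) (addh (subh O h) h) (x k).
  by move=> H; apply: (nk); apply: opt_ext EO H.
have [g [gh Og]] := S2 (fP k) (CR k) Vk xkh NO'.
have hg : h != g by rewrite eq_sym.
have Og' := opt_ext EO Og.
set y' := mv (x k) h g.
set x' := deviate x k y'.
have Ey'h : y' h = (x k h).-1 by rewrite /y' mv_a.
have Ey'g : y' g = (x k g).+1 by rewrite /y' mv_b.
have Ey'o : forall e, e != h -> e != g -> y' e = x k e by move=> e eh eg; rewrite /y' mv_o.
have Esub : forall q, q != k -> subh (others_load x' q) g =1 subh (others_load x q) h.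
  move=> q qk e; have := others_dev_q x y' e qk; rewrite -/x' /subh.
  case: (eqVneq e h) => [->|eh]; first by rewrite Ey'h (negbTE hg) /=; move: xkh; clear; lia.
  case: (eqVneq e g) => [->|eg]; first by rewrite Ey'g /=; clear; lia.
  by rewrite Ey'o //=; clear; lia.
have Oxp : (0 < others_load x p h)%N := leq_trans xkh (others_ge x h kp).
exists x', g, k; split; last first.
  have Hlt : Phi (C k) O y' < Phi (C k) O (x k).
    rewrite ltNge; apply/negP => le; apply: (nk); split; first exact: Vk.1.
    by move=> z Bz; apply: le_trans le (Og'.2 z Bz).
  move: Hlt; rewrite /y' Phi_mv // => Hlt.
  have Hw : ww L0 k g (x k g).+1 < ww L0 k h (x k h).
    have E1 : O g = (L0 g + 1 - (x k g).+1)%N.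
      by have := others_plus x k g; rewrite Hload (negbTE gh) /O; clear; lia.
    have E2 : O h = (L0 h + 1 - x k h)%N.
      by have := others_plus x k h; rewrite Hload eqxx /O; clear; lia.
    by move: Hlt; rewrite /mg E1 E2 /ww; lra.
  have bnd : ((x k g).+1 <= DD)%N.
    apply: leq_trans (dd_le k); have := xsum_le_total g Og'.1.
    by rewrite /y' mv_b.
  have Hr := rank_lt bnd Hw.
  have Hm := mu_dev L0 x k y'.
  have HG := G_mv (rk L0 k) hg xkh.
  move: Hr Hm HG; rewrite /GG /rk -/y' -/x'.
  set A := mu L0 x'; set B := mu L0 x.
  set c1 := (\sum_(e < m) psum _ (x k e))%N; set c2 := (\sum_(e < m) psum _ (y' e))%N.
  set r1 := #|_|; set r2 := #|_|; clear; lia.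
split.
- move=> e; have := load_dev x k y' e; rewrite -/x' Hload.
  case: (eqVneq e h) => [->|eh]; first by rewrite Ey'h (negbTE hg) /=; move: xkh; clear; lia.
  case: (eqVneq e g) => [->|eg]; first by rewrite Ey'g /=; clear; lia.
  by rewrite Ey'o //=; clear; lia.
- by rewrite /x' dev_k /y' mv_b.
- move=> q qk; rewrite /x' dev_q //.
  apply: opt_ext (fun e => esym (Esub q qk e)) _.
  case: (eqVneq q p) => [->|qp]; last exact: Hvirt q qp.
  case: Hst => [[y [d' [Ed Exp Oy]]] | [y [h0 [h0h yh0 Exp Oh0 Oy]]]].
    have Oy1 : opt (f p) d'.+1 (C p) (others_load x p) (inc y h).
      by rewrite -Ed; apply: opt_exty Hp.
    rewrite Ed; apply: opt_exty (fun e => esym (Exp e)) _.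
    exact: (JP0 (fP p) (CR p) Oy Oy1 Oxp).
  have EOp := subh_addh Oh0.
  have Oy1 : opt (f p) (dd p) (C p) (addh (subh (others_load x p) h0) h0) (mv y h0 h).
    by apply: opt_ext (fun e => esym (EOp e)) _; apply: opt_exty Hp.
  have Th : (0 < subh (others_load x p) h0 h)%N.
    by rewrite /subh eq_sym (negbTE h0h) subn0.
  have := JP1 (fP p) (CR p) Oy h0h yh0 Th Oy1.
  move=> H; apply: opt_exty (fun e => esym (Exp e)) _; apply: opt_ext H.
  by move=> e; rewrite /subh EOp.
- rewrite /x' dev_k; apply: opt_ext (fun e => esym (others_dev x k y' e)) Og'.
- right; exists (x k), h; split => //.
  + by move=> e; rewrite /x' dev_k.
  + by rewrite others_dev.
  + by apply: opt_ext Vk => e; rewrite /subh others_dev.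
Qed.

End Game.


Lemma repair (R : realType) n m (f : 'I_n -> {set 'I_m} -> nat) dd (C : 'I_n -> 'I_m -> nat -> nat -> R)
  (fP : forall i, polymatroid_rank (f i)) (CR : forall i e, regular (C i e)) L0 :
  forall N x h p, (mu dd C L0 x <= N)%N -> Inv f dd C L0 x h p -> exists x', NE f dd C x'.
Proof.
elim=> [|N IH] x h p Hmu HI; case: (classic (NE f dd C x)) => [H|nNE]; try by exists x.
  by have [x' [g [k [_ Hlt]]]] := step fP CR HI nNE; move: Hmu Hlt; clear; lia.
have [x' [g [k [HI' Hlt]]]] := step fP CR HI nNE.
apply: (IH x' g k) => //; move: Hmu Hlt; clear; lia.
Qed.

Lemma main_ex (R : realType) n m (f : 'I_n -> {set 'I_m} -> nat) (C : 'I_n -> 'I_m -> nat -> nat -> R)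
  (fP : forall i, polymatroid_rank (f i)) (CR : forall i e, regular (C i e)) :
  forall s dd, (\sum_(q < n) dd q = s)%N -> (forall q, (dd q <= f q setT)%N) ->
  exists x, NE f dd C x.
Proof.
elim=> [|s IH] dd Hs Hd.
  have d0 : forall q, dd q = 0%N.
    by move=> q; move/eqP: Hs; rewrite sum_nat_eq0 => /forallP /(_ q) /eqP.
  exists (fun _ _ => 0%N) => q; rewrite d0.
  have B0 : in_polytope (f q) 0 (fun _ => 0%N).
    by split => [U|]; rewrite /xsum big1.
  split => // z Bz.
  have z0 : forall e, z e = 0%N by move=> e; have := xsum_le_total e Bz; clear; lia.
  by rewrite le_eqVlt; apply/orP; left; apply/eqP; apply: eq_bigr => e _; rewrite z0.
have [i di] : exists i, (0 < dd i)%N.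
  apply: NNPP => H; move: Hs; rewrite big1 // => q _.
  by case: (posnP (dd q)) => // pos; exfalso; apply: H; exists q.
set dd' := fun j => if j == i then (dd i).-1 else dd j.
have Hs' : (\sum_(q < n) dd' q = s)%N.
  rewrite (bigD1 i) //=.
  have -> : dd' i = (dd i).-1 by rewrite /dd' eqxx.
  have -> : (\sum_(q < n | q != i) dd' q = \sum_(q < n | q != i) dd q)%N.
    by apply: eq_bigr => q qi; rewrite /dd' (negbTE qi).
  rewrite (bigD1 i) //= in Hs.
  set S := (\sum_(q < n | _) _)%N in Hs *; move: di Hs; clear; lia.
have Hd' : forall q, (dd' q <= f q setT)%N.
  move=> q; rewrite /dd'; case: (eqVneq q i) => [->|qi]; last exact: Hd.
  exact: leq_trans (leq_pred _) (Hd i).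
have [x0 Hx0] := IH dd' Hs' Hd'.
have Hx0i : opt (f i) (dd i).-1 (C i) (others_load x0 i) (x0 i).
  by have := Hx0 i; rewrite /dd' eqxx.
have lt : ((dd i).-1 < f i setT)%N by rewrite prednK //; apply: Hd.
have [e Oe] := S1 (fP i) (CR i) Hx0i lt.
rewrite prednK // in Oe.
set x1 := deviate x0 i (inc (x0 i) e).
apply: (@repair R n m f dd C fP CR (load x0) (mu dd C (load x0) x1) x1 e i) => //.
split.
- move=> e'; have := load_dev x0 i (inc (x0 i) e) e'; rewrite -/x1 /inc.
  set a := load x1 e'; set b := load x0 e'; clear; lia.
- by rewrite /x1 dev_k /inc eqxx addn1.
- move=> q qi; rewrite /x1 dev_q //.
  have := Hx0 q; rewrite /dd' (negbTE qi) => H; apply: opt_ext H => e'.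
  have := others_dev_q x0 (inc (x0 i) e) e' qi; rewrite -/x1 /subh /inc.
  set a := others_load x1 q e'; set b := others_load x0 q e'; clear; lia.
- rewrite /x1 dev_k; apply: opt_ext (fun e' => esym (others_dev x0 i _ e')) Oe.
- left; exists (x0 i), (dd i).-1; split; first by rewrite prednK.
  + by move=> e'; rewrite /x1 dev_k.
  + by apply: opt_ext (fun e' => esym (others_dev x0 i _ e')) Hx0i.
Qed.


End Aux.
Import Aux.

Theorem theorem5p1 (R : realType) (n m : nat)
  (f : 'I_n -> {set 'I_m} -> nat) (d : 'I_n -> nat)
  (C : 'I_n -> 'I_m -> nat -> nat -> R) :
  (forall i, polymatroid_rank (f i)) ->
  (forall i, (d i <= f i [set: 'I_m])%N) ->
  (forall i e x t, 0 <= C i e x t) ->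
  (forall i e, regular (C i e)) ->
  exists x : 'I_n -> 'I_m -> nat,
    (forall i, in_polytope (f i) (d i) (x i)) /\
    (forall i (y : 'I_m -> nat), in_polytope (f i) (d i) y ->
       private_cost C x i <= private_cost C (deviate x i y) i).
Proof.
move=> fP Hd _ CR.
have [x Hx] := main_ex fP CR (erefl _) Hd.
exists x; split; first by move=> i; case: (Hx i).
move=> i y By.
have -> : private_cost C (deviate x i y) i = Phi (C i) (others_load x i) y.
  by rewrite /private_cost /Phi; apply: eq_bigr => e _; rewrite dev_k others_dev.
exact: (Hx i).2 y By.
Qed.
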